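(* Let $G$ be the undirected graph with vertex set $\{v_1,\dots,v_8\}$ and edge set $\{v_1v_5,\ v_1v_6,\ v_2v_5,\ v_2v_6,\ v_2v_7,\ v_2v_8,\ v_4v_7,\ v_4v_8\}$, and let $V_1=\{v_1,v_2,v_7,v_8\}$, $V_2=\{v_2,v_4,v_5,v_6\}$, $V_3=\{v_1,v_2,v_3,v_4\}$, $V_4=\{v_5,v_6,v_7,v_8\}$. Let $\mu\ge 4$ be even and let $\nu=\frac{\mu}{2}-1$. Consider the population (multiset of $\mu$ vertex covers of $G$) consisting of one copy of $V_1$, one copy of $V_2$, $\nu$ copies of $V_3$ and $\nu$ copies of $V_4$. Then this population has sub-optimal diversity (total Hamming distance) among populations of $\mu$ vertex covers of $G$ of size at most $4$, and replacing any one individual of it with any different vertex cover of $G$ of size at most $4$ strictly reduces the diversity.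
   Context: A vertex cover of $G=(V,E)$ is a set $C\subseteq V$ such that every edge has at least one endpoint in $C$. Subsets of $V$ are identified with bit strings of length $|V|$ (bit $i$ indicates whether $v_i$ is included). For a population $P=(x_1,\dots,x_\mu)$ (a multiset) of bit strings, the diversity is the total Hamming distance $D(P)=\sum_{1\le a<b\le \mu} H(x_a,x_b)$, where $H$ is the Hamming distance. *)

(* Defs.v *)
From mathcomp Require Import all_boot.
Set Implicit Arguments. Unset Strict Implicit. Unset Printing Implicit Defensive.

(* Vertices v_1..v_8 are the ordinals 0..7 of 'I_8 (v_k  ~  k-1).
   A subset of V is identified with its bit string; the Hamming distance of
   two bit strings is the size of the symmetric difference of the sets. *)

Definition hamming (n : nat) (A B : {set 'I_n}) : nat :=
  #|(A :\: B) :|: (B :\: A)|.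

(* Population of size mu: an indexed family (multiset) of mu subsets. *)
Definition diversity (n mu : nat) (P : 'I_mu -> {set 'I_n}) : nat :=
  \sum_(a < mu) \sum_(b < mu | a < b) hamming (P a) (P b).

Definition vertex_cover (n : nat) (E : seq ('I_n * 'I_n)) (C : {set 'I_n}) : bool :=
  all (fun e => (e.1 \in C) || (e.2 \in C)) E.

Definition v (k : nat) : 'I_8 := inord k.-1.

Definition G_edges : seq ('I_8 * 'I_8) :=
  [:: (v 1, v 5); (v 1, v 6); (v 2, v 5); (v 2, v 6);
      (v 2, v 7); (v 2, v 8); (v 4, v 7); (v 4, v 8)].

Definition V1 : {set 'I_8} := [set v 1; v 2; v 7; v 8].
Definition V2 : {set 'I_8} := [set v 2; v 4; v 5; v 6].
Definition V3 : {set 'I_8} := [set v 1; v 2; v 3; v 4].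
Definition V4 : {set 'I_8} := [set v 5; v 6; v 7; v 8].

Definition feasible (C : {set 'I_8}) : bool :=
  vertex_cover G_edges C && (#|C| <= 4).

(* the population: index 0 -> V1, index 1 -> V2,
   indices 2 .. nu+1 -> V3 (nu copies), indices nu+2 .. mu-1 -> V4,
   with nu = mu/2 - 1 (so mu - 2 - nu = nu copies of V4 when mu is even) *)
Definition pop (mu : nat) : 'I_mu -> {set 'I_8} := fun a =>
  let nu := mu./2 - 1 in
  if val a == 0 then V1
  else if val a == 1 then V2
  else if val a < nu + 2 then V3
  else V4.

Definition replace (mu : nat) (P : 'I_mu -> {set 'I_8}) (i : 'I_mu)
  (C : {set 'I_8}) : 'I_mu -> {set 'I_8} :=
  fun j => if j == i then C else P j.

(* Main.v *)
Require Import Defs.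
From mathcomp Require Import all_boot zify.
Set Implicit Arguments. Unset Strict Implicit.
Lemma vval k : 0 < k <= 8 -> val (v k) = k.-1.
Proof. case: k => // k /= Hk. by rewrite /v inordK. Qed.
Lemma veq i j : 0 < i <= 8 -> 0 < j <= 8 -> (v i == v j) = (i == j).
Proof. move=> Hi Hj. rewrite -val_eqE !vval //. case: i Hi => // i; case: j Hj => //. Qed.
Lemma sum8 (F : 'I_8 -> nat) : \sum_(i<8) F i = F (v 1) + F (v 2) + F (v 3) + F (v 4) + F (v 5) + F (v 6) + F (v 7) + F (v 8).
Proof. rewrite !big_ord_recl big_ord0 addn0 !addnA.
repeat congr (_ + _); congr F; apply/val_inj; by rewrite vval. Qed.
Lemma hamE (A B : {set 'I_8}) : hamming A B = \sum_(k<8) ((k \in A) != (k \in B)).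
Proof. rewrite /hamming -sum1_card big_mkcond; apply eq_bigr => k _.
by rewrite !inE; case: (k \in A); case: (k \in B). Qed.
Lemma cardE8 (A : {set 'I_8}) : #|A| = \sum_(k<8) (k \in A).
Proof. rewrite -sum1_card big_mkcond; apply eq_bigr => k _. by case: (k \in A). Qed.
Lemma allv (P : 'I_8 -> Prop) : P (v 1) -> P (v 2) -> P (v 3) -> P (v 4) ->
  P (v 5) -> P (v 6) -> P (v 7) -> P (v 8) -> forall j, P j.
Proof. move=> H1 H2 H3 H4 H5 H6 H7 H8 [m Hm].
have -> : Ordinal Hm = v m.+1 by apply/val_inj; rewrite vval.
by case: m Hm => [|[|[|[|[|[|[|[|//]]]]]]]]. Qed.
Lemma setEq8 (C S : {set 'I_8}) : [&& (v 1 \in C) == (v 1 \in S), (v 2 \in C) == (v 2 \in S),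
  (v 3 \in C) == (v 3 \in S), (v 4 \in C) == (v 4 \in S), (v 5 \in C) == (v 5 \in S),
  (v 6 \in C) == (v 6 \in S), (v 7 \in C) == (v 7 \in S) & (v 8 \in C) == (v 8 \in S)] -> C = S.
Proof. do 7 case/andP => /eqP ?. move=> /eqP ?.
by apply/setP; apply: allv. Qed.

Lemma fin (C S : {set 'I_8}) : S \in [:: V1;V2;V3;V4] -> feasible C -> C != S ->
  hamming C V1 + hamming C V2 < hamming S V1 + hamming S V2 + hamming C S.
Proof.
move=> HS HC HCS.
have HCS' : ~~ [&& (v 1 \in C) == (v 1 \in S), (v 2 \in C) == (v 2 \in S),
  (v 3 \in C) == (v 3 \in S), (v 4 \in C) == (v 4 \in S), (v 5 \in C) == (v 5 \in S),
  (v 6 \in C) == (v 6 \in S), (v 7 \in C) == (v 7 \in S) & (v 8 \in C) == (v 8 \in S)].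
  by apply/negP => /setEq8 E; rewrite E eqxx in HCS.
move: HC HCS'; rewrite /feasible /vertex_cover /G_edges /= cardE8 !hamE !sum8.
rewrite !inE in HS.
case/or4P: HS => /eqP ->; rewrite /V1 /V2 /V3 /V4 !inE !veq //;
move: (v 1 \in C) (v 2 \in C) (v 3 \in C) (v 4 \in C) (v 5 \in C) (v 6 \in C) (v 7 \in C) (v 8 \in C);
by do 8 case.
Qed.

Lemma h34 (Y : {set 'I_8}) : hamming Y V3 + hamming Y V4 = 8.
Proof.
rewrite !hamE !sum8 /V3 /V4 !inE !veq //.
move: (v 1 \in Y) (v 2 \in Y) (v 3 \in Y) (v 4 \in Y) (v 5 \in Y) (v 6 \in Y) (v 7 \in Y) (v 8 \in Y).
by do 8 case.
Qed.

Lemma feasV (S : {set 'I_8}) : S \in [:: V1;V2;V3;V4] -> feasible S.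
Proof.
rewrite !inE => /or4P [] /eqP ->;
by rewrite /feasible /vertex_cover /G_edges /= cardE8 sum8 /V1 /V2 /V3 /V4 !inE !veq.
Qed.

Lemma ham_sym (A B : {set 'I_8}) : hamming A B = hamming B A.
Proof. by rewrite /hamming setUC. Qed.
Lemma ham_xx (A : {set 'I_8}) : hamming A A = 0.
Proof. by rewrite /hamming setDv setU0 cards0. Qed.

Definition Dfull mu (P : 'I_mu -> {set 'I_8}) :=
  \sum_(a < mu) \sum_(b < mu) hamming (P a) (P b).

Lemma divE mu (P : 'I_mu -> {set 'I_8}) : 2 * diversity P = Dfull P.
Proof.
rewrite /Dfull (eq_bigr (fun a : 'I_mu => \sum_(b < mu) (if a < b then hamming (P a) (P b) else 0)
   + \sum_(b < mu) (if b < a then hamming (P b) (P a) else 0))); last first.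
  move=> a _; rewrite -big_split; apply eq_bigr => b _ /=.
  case: (ltngtP a b) => h; rewrite ?addn0 ?add0n //; first by rewrite ham_sym.
  by rewrite (ord_inj h) ham_xx.
rewrite big_split /= [X in _ + X]exchange_big /= addnn -mul2n.
congr (2 * _); apply eq_bigr => a _; by rewrite big_mkcond.
Qed.

Definition Sx mu (P : 'I_mu -> {set 'I_8}) i Y := \sum_(b < mu | b != i) hamming Y (P b).
Definition Rx mu (P : 'I_mu -> {set 'I_8}) i :=
  \sum_(a < mu | a != i) \sum_(b < mu | b != i) hamming (P a) (P b).

Lemma DfullE mu (P : 'I_mu -> {set 'I_8}) i :
  Dfull P = 2 * Sx P i (P i) + Rx P i.
Proof.
rewrite /Dfull (bigD1 i) //=.
rewrite [\sum_(b<mu) hamming (P i) _](bigD1 i) //= ham_xx add0n.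
rewrite [X in _ + X](eq_bigr (fun a : 'I_mu => hamming (P i) (P a) + \sum_(b < mu | b != i) hamming (P a) (P b))); last first.
  by move=> a _; rewrite (bigD1 i) //= ham_sym.
by rewrite big_split /= /Sx /Rx addnA addnn -mul2n.
Qed.

Lemma keyK mu (P : 'I_mu -> {set 'I_8}) i C :
  diversity (replace P i C) + Sx P i (P i) = diversity P + Sx P i C.
Proof.
have E1 := divE (replace P i C); have E2 := divE P.
rewrite (DfullE _ i) in E1; rewrite (DfullE _ i) in E2.
have H1 : Sx (replace P i C) i (replace P i C i) = Sx P i C.
  rewrite /Sx /replace eqxx; apply eq_bigr => b /negbTE -> //.
have H2 : Rx (replace P i C) i = Rx P i.
  rewrite /Rx /replace; apply eq_bigr => a /negbTE ->; apply eq_bigr => b /negbTE -> //.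
rewrite H1 H2 in E1.
apply/eqP; rewrite -(eqn_pmul2l (isT : 0 < 2)) !mulnDr E1 E2; apply/eqP.
lia.
Qed.

Lemma SxE mu (P : 'I_mu -> {set 'I_8}) i Y :
  Sx P i Y + hamming Y (P i) = \sum_(b < mu) hamming Y (P b).
Proof. by rewrite [RHS](bigD1 i) //= addnC. Qed.

Lemma divext mu (P Q : 'I_mu -> {set 'I_8}) : P =1 Q -> diversity P = diversity Q.
Proof. by move=> H; rewrite /diversity; apply eq_bigr => a _; apply eq_bigr => b _; rewrite !H. Qed.

Definition popAB (mu : nat) (A B : {set 'I_8}) : 'I_mu -> {set 'I_8} := fun a =>
  let nu := mu./2 - 1 in
  if val a == 0 then A
  else if val a == 1 then B
  else if val a < nu + 2 then V3
  else V4.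

Lemma popAB_in mu A B (i : 'I_mu) : popAB A B i \in [:: A; B; V3; V4].
Proof. rewrite /popAB !inE; by repeat case: ifP => _; rewrite eqxx ?orbT. Qed.

Lemma Tpop mu A B Y : 4 <= mu -> ~~ odd mu ->
  \sum_(b < mu) hamming Y (popAB (mu:=mu) A B b) = hamming Y A + hamming Y B + (mu./2 - 1) * 8.
Proof.
move=> H4 Hev.
have Hmu : mu = (mu./2 - 1 + 2) + (mu./2 - 1).
  have := odd_double_half mu; rewrite (negbTE Hev) add0n -muln2 => Hm.
  lia.
set nu := mu./2 - 1.
pose g k := hamming Y (if k == 0 then A else if k == 1 then B else if k < nu + 2 then V3 else V4).
have -> : \sum_(b < mu) hamming Y (popAB (mu:=mu) A B b) = \sum_(b < mu) g b by [].
rewrite -(big_mkord xpredT g) (big_cat_nat (n := nu + 2)) //=; last by lia.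
rewrite big_ltn; last by lia.
rewrite big_ltn; last by lia.
rewrite {1 2}/g /=.
rewrite (eq_big_nat _ _ (F2 := fun _ => hamming Y V3)); last first.
  move=> k /andP [Hk1 Hk2]; rewrite /g.
  have -> : (k == 0) = false by lia.
  have -> : (k == 1) = false by lia.
  by rewrite Hk2.
rewrite [X in _ + X](eq_big_nat _ _ (F2 := fun _ => hamming Y V4)); last first.
  move=> k /andP [Hk1 Hk2]; rewrite /g.
  have -> : (k == 0) = false by lia.
  have -> : (k == 1) = false by lia.
  have -> : (k < nu + 2) = false by lia.
  by [].
rewrite !sum_nat_const_nat.
have -> : mu - (nu + 2) = nu by lia.
have -> : nu + 2 - 2 = nu by lia.
rewrite -!addnA -mulnDr h34; lia.
Qed.

Lemma popE mu : pop (mu:=mu) =1 popAB (mu:=mu) V1 V2.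
Proof. by []. Qed.

Lemma step mu A B (i : 'I_mu) C : 4 <= mu -> ~~ odd mu -> popAB A B i \in [:: A; B; V3; V4] ->
  diversity (replace (popAB A B) i C) + hamming (popAB A B i) A + hamming (popAB A B i) B
  + hamming C (popAB A B i)
  = diversity (popAB (mu:=mu) A B) + hamming C A + hamming C B.
Proof.
move=> H4 Hev _.
have K := keyK (popAB (mu:=mu) A B) i C.
have S1 := SxE (popAB (mu:=mu) A B) i C.
have S2 := SxE (popAB (mu:=mu) A B) i (popAB A B i).
rewrite !Tpop // ham_xx addn0 in S1 S2.
lia.
Qed.

Theorem lemma4 (mu : nat) (Hmu : 4 <= mu) (Heven : ~~ odd mu) :
  (forall i : 'I_mu, feasible (pop i)) /\
  (exists Q : 'I_mu -> {set 'I_8},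
      (forall i, feasible (Q i)) /\ diversity (pop (mu:=mu)) < diversity Q) /\
  (forall (i : 'I_mu) (C : {set 'I_8}),
      feasible C -> C != pop i ->
      diversity (replace (pop (mu:=mu)) i C) < diversity (pop (mu:=mu))).
Proof.
have popin : forall i : 'I_mu, pop i \in [:: V1; V2; V3; V4].
  by move=> i; rewrite popE popAB_in.
split; first by move=> i; apply: feasV.
split.
  have h0 : 0 < mu by lia.
  have h1 : 1 < mu by lia.
  pose i0 := Ordinal h0; pose i1 := Ordinal h1.
  exists (popAB (mu:=mu) V3 V4); split.
    move=> i; apply: feasV; have := popAB_in V3 V4 i; rewrite !inE.
    by case/or4P => ->; rewrite ?orbT.
  have E1 : diversity (popAB (mu:=mu) V3 V2) = diversity (replace (popAB (mu:=mu) V1 V2) i0 V3).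
    apply: divext => j; rewrite /replace /popAB -val_eqE /=.
    by case: (nat_of_ord j) => [|[|k]].
  have E2 : diversity (popAB (mu:=mu) V3 V4) = diversity (replace (popAB (mu:=mu) V3 V2) i1 V4).
    apply: divext => j; rewrite /replace /popAB -val_eqE /=.
    by case: (nat_of_ord j) => [|[|k]].
  have T1 := @step mu V1 V2 i0 V3 Hmu Heven (popAB_in _ _ _).
  have T2 := @step mu V3 V2 i1 V4 Hmu Heven (popAB_in _ _ _).
  rewrite -E1 in T1; rewrite -E2 in T2.
  change (diversity (popAB (mu:=mu) V1 V2) < diversity (popAB (mu:=mu) V3 V4)).
  move: T1 T2; rewrite /popAB /= /V1 /V2 /V3 /V4 !hamE !sum8 !inE !veq //=.
  lia.
move=> i C HC HCi.
have T := @step mu V1 V2 i C Hmu Heven (popAB_in _ _ _).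
have F : hamming C V1 + hamming C V2 < hamming (popAB V1 V2 i) V1 + hamming (popAB V1 V2 i) V2 + hamming C (popAB V1 V2 i) := fin (popin i) HC HCi.
change (diversity (replace (popAB (mu:=mu) V1 V2) i C) < diversity (popAB (mu:=mu) V1 V2)).
lia.
Qed.
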